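(* Let $c\in[0,1)$, $b(c)=\tfrac12-c$, $f_c(x)=\log|\cos\pi(x+c)|$, and suppose $\chi_-(f_c,T(b(c)))>-\infty$. Then there is a constant $K>0$ such that for every $x\in\mathbb T$, either $T^n(x)=b(c)$ for some $n\ge0$, or $\chi_+(f_c,x)>-K$. Consequently $\alpha(c):=\inf_{\mu\in\mathcal M_T}\int f_c\,d\mu\ge -K$.
   Context: $\mathbb T=\mathbb R/\mathbb Z$, $Tx=2x\bmod1$, $\mathcal M_T$ the set of $T$-invariant Borel probability measures. $\chi_-(f_c,x)=\liminf_{n\to\infty}\frac1n\sum_{i=0}^{n-1}f_c(T^ix)$ and $\chi_+(f_c,x)=\limsup_{n\to\infty}\frac1n\sum_{i=0}^{n-1}f_c(T^ix)$. Convention $\log0=-\infty$. *)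

(* Defs.v *)
From HB Require Import structures.
From mathcomp Require Import all_boot all_order all_algebra.
From mathcomp Require Import all_classical all_reals all_analysis.
Set Implicit Arguments. Unset Strict Implicit. Unset Printing Implicit Defensive.
Import Order.TTheory GRing.Theory Num.Theory.
Local Open Scope ring_scope.
Local Open Scope classical_set_scope.

(* The circle T = R/Z is represented by the real line; a point of T is      *)
(* represented by its canonical representative frac x in [0,1).            *)
Definition frac {R : realType} (x : R) : R := x - (Num.floor x)%:~R.

Definition Tdbl {R : realType} (x : R) : R := frac (2 * x).

Definition bpt {R : realType} (c : R) : R := frac (2^-1 - c).

Definition fc {R : realType} (c : R) (x : R) : \bar R :=
  if cos (pi * (x + c)) == 0 then -oo%E else (ln `|cos (pi * (x + c))|)%:E.

Definition birkhoff {R : realType} (f : R -> \bar R) (x : R) (n : nat) : \bar R :=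
  ((n%:R)^-1)%:E * (\sum_(i < n) f (iter i Tdbl x))%E.

Definition chi_minus {R : realType} (f : R -> \bar R) (x : R) : \bar R :=
  limn_einf (birkhoff f x).
Definition chi_plus {R : realType} (f : R -> \bar R) (x : R) : \bar R :=
  limn_esup (birkhoff f x).

(* invariant under Tdbl is automatically concentrated on [0,1)             *)
(* (Tdbl^-1 [0,1) = R), so these are exactly the invariant measures on T.  *)
Definition invariant_prob {R : realType} (mu : probability R R) : Prop :=
  forall A : set R, measurable A -> mu (Tdbl @^-1` A) = mu A.

Definition alpha {R : realType} (c : R) : \bar R :=
  ereal_inf [set (\int[mu]_x fc c x)%E | mu in [set mu : probability R R | invariant_prob mu]].

(* Main.v *)
Require Import Defs.
From HB Require Import structures.
From mathcomp Require Import all_boot all_order all_algebra.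
From mathcomp Require Import all_classical all_reals all_analysis.
From mathcomp Require Import measurable_realfun.
Import Order.TTheory GRing.Theory Num.Theory.
Local Open Scope ring_scope.

Lemma abs_cos_addpin {R : realType} (x : R) (n : nat) :
  `|cos (x + pi * n%:R)| = `|cos x|.
Proof.
elim: n x => [|n IH] x; first by rewrite mulr0 addr0.
by rewrite -natr1 mulrDr mulr1 addrA cosDpi normrN IH.
Qed.

Lemma abs_sin_addpin {R : realType} (x : R) (n : nat) :
  `|sin (x + pi * n%:R)| = `|sin x|.
Proof.
elim: n x => [|n IH] x; first by rewrite mulr0 addr0.
by rewrite -natr1 mulrDr mulr1 addrA sinDpi normrN IH.
Qed.

Lemma abs_cos_addpi {R : realType} (x : R) (k : int) :
  `|cos (x + pi * k%:~R)| = `|cos x|.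
Proof.
case: k => n; first exact: abs_cos_addpin.
rewrite NegzE mulrNz mulrN.
by rewrite -(@abs_cos_addpin _ (x - pi * n.+1%:R) n.+1) subrK.
Qed.

Lemma abs_sin_addpi {R : realType} (x : R) (k : int) :
  `|sin (x + pi * k%:~R)| = `|sin x|.
Proof.
case: k => n; first exact: abs_sin_addpin.
rewrite NegzE mulrNz mulrN.
by rewrite -(@abs_sin_addpin _ (x - pi * n.+1%:R) n.+1) subrK.
Qed.

From mathcomp Require Import ring lra.

Definition gg {R : realType} (c u : R) : R := `|cos (pi * (u + c))|.
Definition DD {R : realType} (u v : R) : R := `|sin (pi * (u - v))|.

Lemma Tdbl_E {R : realType} (x : R) :
  Tdbl x = 2 * x + (- Num.floor (2 * x))%:~R.
Proof. by rewrite /Tdbl /frac intrN. Qed.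

Lemma gg_shift {R : realType} (c u : R) (k : int) :
  gg c (u + k%:~R) = gg c u.
Proof.
rewrite /gg -(abs_cos_addpi (pi * (u + c)) k); congr (`|cos _|); ring.
Qed.

Lemma gg_T {R : realType} (c z : R) : gg c (Tdbl z) = gg c (2 * z).
Proof. by rewrite Tdbl_E gg_shift. Qed.

Lemma DD_T {R : realType} (u v : R) : DD (Tdbl u) (Tdbl v) <= 2 * DD u v.
Proof.
rewrite /DD !Tdbl_E.
have -> : pi * (2 * u + (- Num.floor (2 * u))%:~R - (2 * v + (- Num.floor (2 * v))%:~R))
  = (pi * (u - v)) *+ 2 + pi * ((Num.floor (2 * v) - Num.floor (2 * u))%:~R).
  rewrite !intrD !intrN; ring.
rewrite abs_sin_addpi sin_mulr2n normrMn normrM mulr2n.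
have h1 := cos_max (pi * (u - v)); have h2 := normr_ge0 (sin (pi * (u - v))).
nra.
Qed.

Lemma DD_iter {R : realType} (u v : R) (k : nat) :
  DD (iter k Tdbl u) (iter k Tdbl v) <= 2 ^+ k * DD u v.
Proof.
elim: k => [|k IH] /=; first by rewrite expr0 mul1r.
apply: (le_trans (DD_T _ _)).
by rewrite exprS -mulrA ler_pM2l.
Qed.

Lemma gg_bpt {R : realType} (c y : R) : gg c y = DD y (bpt c).
Proof.
rewrite /gg /DD /bpt /frac.
have -> : pi * (y - (2^-1 - c - (Num.floor (2^-1 - c))%:~R))
  = (pi * (y + c) - pi / 2) + pi * (Num.floor (2^-1 - c))%:~R by ring.
by rewrite abs_sin_addpi sinBpihalf normrN.
Qed.

Lemma DD_sym {R : realType} (u v : R) : DD u v = DD v u.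
Proof. by rewrite /DD -opprB mulrN sinN normrN. Qed.

Lemma abs_cos_le {R : realType} (a b : R) : `|cos a| <= `|cos b| + `|sin (a - b)|.
Proof.
have -> : a = b + (a - b) by ring.
rewrite cosD; have -> : b + (a - b) - b = a - b by ring.
apply: (le_trans (ler_normB _ _)); rewrite !normrM.
apply: lerD; first by rewrite ler_piMr // cos_max.
by rewrite ler_piMl // sin_max.
Qed.

Lemma gg_compare {R : realType} (c y : R) (k : nat) :
  gg c (iter k Tdbl (bpt c)) <= gg c (iter k Tdbl y) + 2 ^+ k * gg c y.
Proof.
apply: (le_trans (abs_cos_le _ (pi * (iter k Tdbl y + c)))).
rewrite lerD2l.
have -> : pi * (iter k Tdbl (bpt c) + c) - pi * (iter k Tdbl y + c)
  = pi * (iter k Tdbl (bpt c) - iter k Tdbl y) by ring.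
apply: (le_trans (DD_iter _ _ _)).
by rewrite -DD_sym -gg_bpt.
Qed.

Lemma gg_le1 {R : realType} (c u : R) : gg c u <= 1.
Proof. exact: cos_max. Qed.

Lemma gg_ge0 {R : realType} (c u : R) : 0 <= gg c u.
Proof. exact: normr_ge0. Qed.

Lemma ln2_gt0 {R : realType} : 0 < ln (2 : R).
Proof. by apply: ln_gt0; rewrite ltr1n. Qed.

Lemma exp_ln2n {R : realType} (n : nat) : expR (n%:R * ln (2 : R)) = 2 ^+ n.
Proof. by rewrite expRM_natl lnK // posrE. Qed.

Lemma ex_nat_gt {R : realType} (x : R) : exists k : nat, x < k%:R.
Proof.
have [x0|x0] := leP 0 x; first by exists (Num.Def.archi_bound x); exact: archi_boundP.
by exists 0%N; rewrite x0.
Qed.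

Lemma pointwise_from_sum {R : realType} (c C : R) (C0 : 0 <= C)
  (hpos : forall j, 0 < gg c (iter j.+1 Tdbl (bpt c)))
  (hsum : forall n : nat, - C * n%:R <= \sum_(j < n) ln (gg c (iter j.+1 Tdbl (bpt c))))
  (j : nat) : - C * j.+1%:R <= ln (gg c (iter j.+1 Tdbl (bpt c))).
Proof.
apply: (le_trans (hsum j.+1)); rewrite big_ord_recr /= gerDr.
by apply: sumr_le0 => i _; apply: ln_le0; exact: gg_le1.
Qed.

Lemma block {R : realType} (c C : R) (C0 : 0 <= C)
  (hpos : forall j, 0 < gg c (iter j.+1 Tdbl (bpt c)))
  (hsum : forall n : nat, - C * n%:R <= \sum_(j < n) ln (gg c (iter j.+1 Tdbl (bpt c))))
  (y t : R) (hy : gg c y <= expR t) :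
  exists p : nat,
    (forall j, (j < p)%N -> 0 < gg c (iter j.+1 Tdbl y) /\
        ln (gg c (iter j.+1 Tdbl (bpt c))) - ln 2 <= ln (gg c (iter j.+1 Tdbl y)))
    /\ - ln 2 - (ln 2 + C) * p.+1%:R <= t.
Proof.
set L := ln 2 + C.
have L0 : 0 < L by rewrite /L; have := @ln2_gt0 R; lra.
have exP : exists k : nat, (- ln 2 < t + L * k.+1%:R).
  have [k hk] := ex_nat_gt ((- ln 2 - t) / L).
  exists k; rewrite -ltrBlDl; apply: (lt_le_trans (y := L * k%:R)).
    by rewrite mulrC -ltr_pdivrMr.
  by rewrite ler_pM2l // ler_nat.
case: (ex_minnP exP) => p Pp minp.
exists p; split; last by move: Pp; set u := L * _; lra.
move=> j jp.
have nPj : t + L * j.+1%:R <= - ln 2.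
  by rewrite leNgt; apply/negP => /minp; rewrite leqNgt jp.
have hj := @pointwise_from_sum _ c C C0 hpos hsum j.
set a := gg c (iter j.+1 Tdbl (bpt c)) in hj *.
have a0 : 0 < a by exact: hpos.
have key : 2 ^+ j.+1 * gg c y <= a / 2.
  apply: (le_trans (y := 2 ^+ j.+1 * expR t)).
    by rewrite ler_pM2l // exprn_gt0.
  rewrite -exp_ln2n -expRD -(lnK (x := a)) ?posrE // -[X in _ / X](lnK (x := 2)) ?posrE //.
  rewrite -expRB ler_expR.
  move: nPj hj; rewrite /L; set l2 := ln 2; set lj := ln a; rewrite mulrDl => nPj hj.
  have : j.+1%:R * l2 + t <= - C * j.+1%:R - l2.
    move: nPj; set m := j.+1%:R; lra.
  lra.
have hcmp := gg_compare c y j.+1.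
have ge : a / 2 <= gg c (iter j.+1 Tdbl y) by rewrite -/a in hcmp; lra.
have a20 : 0 < a / 2 by rewrite divr_gt0.
split; first exact: lt_le_trans ge.
rewrite -ln_div ?posrE //.
by rewrite ler_ln ?posrE // (lt_le_trans a20).
Qed.

Lemma block_sum {R : realType} (c C : R) (C0 : 0 <= C)
  (hpos : forall j, 0 < gg c (iter j.+1 Tdbl (bpt c)))
  (hsum : forall n : nat, - C * n%:R <= \sum_(j < n) ln (gg c (iter j.+1 Tdbl (bpt c))))
  (phi : R -> R) (hphi : forall u, 0 < gg c u -> ln (gg c u) <= phi u)
  (y : R) (hy : gg c y <= expR (phi y)) :
  exists m : nat, (0 < m)%N /\
    - (3 * ln 2 + 2 * C) * m%:R <= \sum_(k < m) phi (iter k Tdbl y) /\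
    forall i : nat, (0 < i <= m)%N ->
      phi y - (3 * ln 2 + 2 * C) * i%:R <= \sum_(k < i) phi (iter k Tdbl y).
Proof.
have [p [hp ht]] := @block _ c C C0 hpos hsum y (phi y) hy.
have l20 := @ln2_gt0 R.
have part n : (n <= p)%N ->
    - C * n%:R - n%:R * ln 2 <= \sum_(j < n) phi (iter j.+1 Tdbl y).
  move=> np.
  apply: (le_trans (y := \sum_(j < n) (ln (gg c (iter j.+1 Tdbl (bpt c))) - ln 2))).
    rewrite sumrB sumr_const card_ord mulr_natl; have := hsum n; lra.
  apply: ler_sum => j _.
  have jp : (j < p)%N by apply: leq_trans np.
  have [h1 h2] := hp j jp.
  exact: (le_trans h2 (hphi _ h1)).
have isum i : (0 < i <= p.+1)%N ->
    phi y - (C + ln 2) * (i.-1)%:R <= \sum_(k < i) phi (iter k Tdbl y).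
  case: i => [//|i] /= hi.
  rewrite big_ord_recl /= lerD2l.
  have := part i hi; set m := i%:R; lra.
exists p.+1; split => //; split.
  apply: (le_trans _ (isum p.+1 _)); last by rewrite /= leqnn.
  rewrite /=; move: ht; rewrite -natr1; set m := p%:R.
  have m0 : 0 <= m by rewrite /m ler0n.
  nra.
move=> i hi; apply: (le_trans _ (isum i hi)).
case: i hi => [//|i] hi /=; rewrite -natr1; set m := i%:R.
have m0 : 0 <= m by rewrite /m ler0n.
nra.
Qed.

Lemma sum_split_iter {R : realType} (phi : R -> R) (x : R) (m r : nat) :
  \sum_(k < m + r) phi (iter k Tdbl x) =
  \sum_(k < m) phi (iter k Tdbl x) + \sum_(k < r) phi (iter k Tdbl (iter m Tdbl x)).
Proof.
rewrite big_split_ord /=; congr (_ + _).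
by apply: eq_bigr => i _; rewrite /= -iterD addnC.
Qed.

Lemma K0_ge0 {R : realType} (C : R) (C0 : 0 <= C) : 0 <= 3 * ln (2 : R) + 2 * C.
Proof. have := @ln2_gt0 R; lra. Qed.

Lemma global_bound {R : realType} (c C : R) (C0 : 0 <= C)
  (hpos : forall j, 0 < gg c (iter j.+1 Tdbl (bpt c)))
  (hsum : forall n : nat, - C * n%:R <= \sum_(j < n) ln (gg c (iter j.+1 Tdbl (bpt c))))
  (phi : R -> R) (hphi : forall u, 0 < gg c u -> ln (gg c u) <= phi u)
  (hphiy : forall y, gg c y <= expR (phi y))
  (M : R) (M0 : 0 <= M) (hM : forall y, - M <= phi y) :
  forall (n : nat) (y : R),
    - M - (3 * ln 2 + 2 * C) * n%:R <= \sum_(k < n) phi (iter k Tdbl y).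
Proof.
have K0 := @K0_ge0 _ C C0.
set K := 3 * ln 2 + 2 * C in K0 *.
elim/ltn_ind => n IH y.
have [m [m0 [hm hi]]] := @block_sum _ c C C0 hpos hsum phi hphi y (hphiy y).
have [nm|mn] := leqP n m.
  case: n IH nm => [|n] IH nm.
    by rewrite big_ord0 mulr0 subr0 oppr_le0.
  apply: le_trans (hi n.+1 _); last by rewrite /= nm.
  by rewrite lerD2r.
have -> : n = (m + (n - m))%N by rewrite subnKC // ltnW.
rewrite sum_split_iter.
have := IH (n - m)%N _ (iter m Tdbl y).
have -> : (n - m < n)%N by rewrite ltn_subrL m0 (leq_trans m0 (ltnW mn)).
move=> /(_ isT) h2.
rewrite natrD; move: hm h2; rewrite -/K; set a := m%:R; set b := (n - m)%:R.
set s1 := \sum_(k < m) _; set s2 := \sum_(k < n - m) _.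
lra.
Qed.

Lemma inf_often {R : realType} (c C : R) (C0 : 0 <= C)
  (hpos : forall j, 0 < gg c (iter j.+1 Tdbl (bpt c)))
  (hsum : forall n : nat, - C * n%:R <= \sum_(j < n) ln (gg c (iter j.+1 Tdbl (bpt c))))
  (x : R) (hx : forall k, 0 < gg c (iter k Tdbl x)) :
  forall N : nat, exists n : nat, (N <= n)%N /\
    - (3 * ln 2 + 2 * C) * n%:R <= \sum_(k < n) ln (gg c (iter k Tdbl x)).
Proof.
elim => [|N [n [Nn hn]]].
  by exists 0%N; rewrite big_ord0 mulr0.
have hy : gg c (iter n Tdbl x) <= expR (ln (gg c (iter n Tdbl x))).
  by rewrite lnK // posrE.
have [m [m0 [hm _]]] := @block_sum _ c C C0 hpos hsum (fun u => ln (gg c u))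
   (fun u _ => lexx _) (iter n Tdbl x) hy.
exists (n + m)%N; split; first by rewrite -addn1 leq_add.
rewrite (sum_split_iter (fun u => ln (gg c u))) natrD.
move: hn hm; set K := 3 * ln 2 + 2 * C; set a := n%:R; set b := m%:R.
set s1 := \sum_(k < n) _; set s2 := \sum_(k < m) _.
lra.
Qed.

Local Open Scope ereal_scope.

Lemma fcE {R : realType} (c u : R) :
  fc c u = if gg c u == 0%R then -oo else (ln (gg c u))%:E.
Proof. by rewrite /fc /gg normr_eq0. Qed.

Lemma fc_le0 {R : realType} (c u : R) : fc c u <= 0.
Proof.
rewrite fcE; case: ifP => // _; rewrite lee_fin; apply: ln_le0; exact: gg_le1.
Qed.

Lemma sum_fc_fin {R : realType} (c x : R) (n : nat) :
  (forall i, (i < n)%N -> (0 < gg c (iter i Tdbl x))%R) ->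
  \sum_(i < n) fc c (iter i Tdbl x) = (\sum_(i < n) ln (gg c (iter i Tdbl x)))%:E.
Proof.
move=> h; rewrite -sumEFin; apply: eq_bigr => i _.
by rewrite fcE gt_eqF //; exact: h.
Qed.

Lemma sum_fc_Ny {R : realType} (c x : R) (n : nat) (i : nat) :
  (i < n)%N -> gg c (iter i Tdbl x) = 0%R ->
  \sum_(k < n) fc c (iter k Tdbl x) = -oo.
Proof.
elim: n => [//|n IH] lin hi.
rewrite big_ord_recr /=.
have [ein|] := eqVneq i n.
  by rewrite fcE -ein hi eqxx addeNy.
move=> ine; have lin' : (i < n)%N by rewrite ltn_neqAle ine -ltnS.
by rewrite IH // addNye.
Qed.

Lemma birkhoff_fin {R : realType} (c x : R) (n : nat) :
  (forall i, (i < n)%N -> (0 < gg c (iter i Tdbl x))%R) ->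
  birkhoff (fc c) x n = ((n%:R)^-1 * \sum_(i < n) ln (gg c (iter i Tdbl x)))%:E.
Proof. by move=> h; rewrite /birkhoff sum_fc_fin. Qed.

Lemma birkhoff_Ny {R : realType} (c x : R) (n : nat) (i : nat) :
  (i < n)%N -> gg c (iter i Tdbl x) = 0%R -> birkhoff (fc c) x n = -oo.
Proof.
move=> lin hi; rewrite /birkhoff (@sum_fc_Ny _ c x n i lin hi) muleC gt0_mulNye //.
by rewrite lte_fin invr_gt0 ltr0n (leq_ltn_trans _ lin).
Qed.

Lemma sum_ln_mono {R : realType} (c x : R) (n m : nat) : (n <= m)%N ->
  (\sum_(k < m) ln (gg c (iter k Tdbl x)) <= \sum_(k < n) ln (gg c (iter k Tdbl x)))%R.
Proof.
move=> nm; rewrite -(subnKC nm) (sum_split_iter (fun u => ln (gg c u))) gerDl.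
by apply: sumr_le0 => i _; apply: ln_le0; exact: gg_le1.
Qed.

Lemma extract_hyp {R : realType} (c : R)
  (hchi : -oo < chi_minus (fc c) (Tdbl (bpt c))) :
  exists C : R, (0 <= C)%R /\ (forall j, 0 < gg c (iter j.+1 Tdbl (bpt c)))%R /\
    (forall n : nat, - C * n%:R <= \sum_(j < n) ln (gg c (iter j.+1 Tdbl (bpt c))))%R.
Proof.
set y := Tdbl (bpt c); set u := birkhoff (fc c) y.
have [N [r hr]] : exists N r, forall k, (N <= k)%N -> r%:E <= u k.
  move: hchi; rewrite /chi_minus limn_einf_lim (cvg_lim _ (@cvg_einfs_sup R u)) //.
  move=> /ereal_sup_gt [_ [N _ <-]] hN.
  have lb k : (N <= k)%N -> einfs u N <= u k.
    by move=> Nk; apply: ereal_inf_lbound; exists k.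
  exists N; move: hN lb; case: (einfs u N) => [r| |] //= _ lb.
    by exists r.
  by exists 0%R => k /lb; rewrite leye_eq => /eqP ->; rewrite leey.
have pos k i : (N <= k)%N -> (i < k)%N -> (0 < gg c (iter i Tdbl y))%R.
  move=> Nk ik; rewrite lt_neqAle gg_ge0 andbT eq_sym; apply/negP => /eqP h0.
  by have := hr k Nk; rewrite /u (@birkhoff_Ny _ c y k i ik h0) leeNy_eq.
have hpos j : (0 < gg c (iter j.+1 Tdbl (bpt c)))%R.
  by rewrite iterSr; apply: (pos (maxn N j.+1)); rewrite ?leq_maxl ?leq_maxr.
set N' := maxn N 1.
have N'1 : (1 <= N')%N by rewrite leq_maxr.
have bnd k : (N' <= k)%N -> (r * k%:R <= \sum_(i < k) ln (gg c (iter i Tdbl y)))%R.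
  move=> Nk; have Nk' : (N <= k)%N by apply: leq_trans Nk; rewrite leq_maxl.
  have k0 : (0 < k)%N by apply: leq_trans Nk.
  have := hr k Nk'; rewrite /u birkhoff_fin; last by move=> i; exact: pos.
  rewrite lee_fin => h; have := ler_wpM2r (ler0n R k) h.
  by rewrite mulrAC mulVf ?pnatr_eq0 -?lt0n // mul1r.
exists (`|r| * N'%:R)%R; split; first by rewrite mulr_ge0.
split => // n.
have -> : (\sum_(j < n) ln (gg c (iter j.+1 Tdbl (bpt c))) =
          \sum_(j < n) ln (gg c (iter j Tdbl y)))%R.
  by apply: eq_bigr => j _; rewrite iterSr.
have ra : (- `|r| <= r)%R by apply: lerNnormlW.
have ra0 : (0 <= `|r|)%R := normr_ge0 r.
have N'0 : (1 <= N'%:R :> R)%R by rewrite ler1n.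
have [Nn|nN] := leqP N' n.
  apply: (le_trans _ (bnd n Nn)).
  have n0 : (0 <= n%:R :> R)%R by rewrite ler0n.
  apply: ler_wpM2r => //.
  set b := N'%:R in N'0 *; nra.
case: n nN => [|n] nN; first by rewrite big_ord0 mulr0.
apply: (le_trans _ (@sum_ln_mono _ c y n.+1 N' (ltnW nN))).
apply: (le_trans _ (bnd N' (leqnn _))).
have : (1 <= n.+1%:R :> R)%R by rewrite ler1n.
set a := n.+1%:R; set b := N'%:R in N'0 * => a1.
have h1 : (0 <= `|r| * b)%R by rewrite mulr_ge0 // (le_trans ler01).
have h2 : (0 <= (`|r| * b) * (a - 1))%R by rewrite mulr_ge0 // subr_ge0.
have h3' : (0 <= r + `|r|)%R by lra.
have h3 : (0 <= (r + `|r|) * b)%R by rewrite mulr_ge0 // (le_trans ler01).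
nra.
Qed.

Local Close Scope ereal_scope.

Lemma frac_itv {R : realType} (y : R) : 0 <= Defs.frac y < 1.
Proof.
rewrite /Defs.frac subr_ge0 Num.Theory.floor_le /= ltrBlDl.
by have := Num.Theory.floorD1_gt y; rewrite intrD.
Qed.

Lemma iter_itv {R : realType} (x : R) (k : nat) : 0 <= x < 1 ->
  0 <= iter k Tdbl x < 1.
Proof. by case: k => [//|k] _ /=; exact: frac_itv. Qed.

Lemma gg_zero {R : realType} (c z : R) : 0 <= z < 1 -> gg c z = 0 -> z = bpt c.
Proof.
move=> /andP [z0 z1]; rewrite gg_bpt /DD => /eqP; rewrite normr_eq0 => /eqP hs.
have /andP [b0 b1] := frac_itv (2^-1 - c); rewrite -/(bpt c) in b0 b1.
have pi0 := @pi_gt0 R.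
have [w0|w0|w0] := ltgtP (z - bpt c) 0.
- have : 0 < sin (pi * (bpt c - z)).
    apply: sin_gt0_pi; apply/andP; split.
      by rewrite mulr_gt0 // subr_gt0 -subr_lt0.
    by rewrite -[X in _ < X]mulr1 ltr_pM2l //; lra.
  by rewrite -opprB mulrN sinN hs oppr0 ltxx.
- have : 0 < sin (pi * (z - bpt c)).
    apply: sin_gt0_pi; apply/andP; split; first by rewrite mulr_gt0.
    by rewrite -[X in _ < X]mulr1 ltr_pM2l //; lra.
  by rewrite hs ltxx.
- by apply/eqP; rewrite -subr_eq0 w0.
Qed.

Lemma avoid_pos {R : realType} (c x : R) : 0 <= x < 1 ->
  ~ (exists n : nat, iter n Tdbl x = bpt c) ->
  forall k, 0 < gg c (iter k Tdbl x).
Proof.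
move=> hx hn k; rewrite lt_neqAle gg_ge0 andbT eq_sym; apply/eqP => h0.
by apply: hn; exists k; apply: gg_zero h0; exact: iter_itv.
Qed.

Local Open Scope ereal_scope.

Lemma part1 {R : realType} (c C : R) (C0 : (0 <= C)%R)
  (hpos : forall j, (0 < gg c (iter j.+1 Tdbl (bpt c)))%R)
  (hsum : forall n : nat, (- C * n%:R <= \sum_(j < n) ln (gg c (iter j.+1 Tdbl (bpt c))))%R)
  (x : R) (hx : forall k, (0 < gg c (iter k Tdbl x))%R) :
  (- (3 * ln 2 + 2 * C))%:E <= chi_plus (fc c) x.
Proof.
set u := birkhoff (fc c) x.
rewrite /chi_plus limn_esup_lim (cvg_lim _ (@cvg_esups_inf R u)) //.
apply: le_ereal_inf_tmp => _ [N _ <-].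
have [n [Nn hn]] := @inf_often _ c C C0 hpos hsum x hx (maxn N 1).
apply: (le_trans _ (ereal_sup_ubound _)); last first.
  by exists n => //=; apply: leq_trans Nn; rewrite leq_maxl.
have n0 : (0 < n)%N by apply: leq_trans Nn; rewrite leq_maxr.
rewrite /u birkhoff_fin; last by move=> i _; exact: hx.
rewrite lee_fin ler_pdivlMl ?ltr0n // mulrN mulrC.
by rewrite -mulNr.
Qed.

Local Close Scope ereal_scope.

Lemma measurable_scale {R : realType} (a : R) :
  measurable_fun setT (fun x : R => a * x).
Proof. exact: (@measurable_funM _ _ _ setT (cst a) id (measurable_cst a) (@measurable_id _ _ setT)). Qed.

Lemma measurable_floorR {R : realType} :
  measurable_fun setT (fun x : R => (Num.floor x)%:~R : R).
Proof.
apply: nondecreasing_measurable => // x y xy.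
by rewrite ler_int Num.Theory.le_floor.
Qed.

Lemma measurable_Tdbl {R : realType} : measurable_fun setT (@Tdbl R).
Proof.
have -> : @Tdbl R = (fun x => 2 * x) \+ (fun x => - (Num.floor (2 * x))%:~R).
  by apply/funext => x; rewrite /Tdbl /Defs.frac.
apply: measurable_funD; first exact: measurable_scale.
apply: measurable_funN.
exact: (measurableT_comp measurable_floorR (measurable_scale 2)).
Qed.

Lemma measurable_iter {R : realType} (k : nat) :
  measurable_fun setT (iter k (@Tdbl R)).
Proof.
elim: k => [|k IH]; first exact: measurable_id.
exact: (measurableT_comp measurable_Tdbl IH).
Qed.

Lemma measurable_gg {R : realType} (c : R) : measurable_fun setT (gg c).
Proof.
rewrite /gg.
have h1 : measurable_fun setT (fun u : R => pi * (u + c)).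
  apply: (measurableT_comp (measurable_scale pi)).
  exact: (@measurable_funD _ _ _ setT id (cst c) (@measurable_id _ _ setT) (measurable_cst c)).
have h2 : measurable_fun setT (fun u : R => cos (pi * (u + c))).
  exact: (measurableT_comp (continuous_measurable_fun (@continuous_cos R)) h1).
by apply: measurableT_comp.
Qed.

Definition FM {R : realType} (c : R) (M : nat) (u : R) : R :=
  ln (Num.max (gg c u) (expR (- M%:R))).

Lemma measurable_FM {R : realType} (c : R) (M : nat) : measurable_fun setT (FM c M).
Proof.
rewrite /FM; apply: measurableT_comp; first exact: measurable_ln.
exact: (measurable_maxr (measurable_gg c) (measurable_cst _)).
Qed.

Lemma FM_pos {R : realType} (c : R) (M : nat) (u : R) :
  0 < Num.max (gg c u) (expR (- M%:R)).
Proof. by rewrite (lt_le_trans (expR_gt0 (- M%:R))) // le_max lexx orbT. Qed.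

Lemma FM_le0 {R : realType} (c : R) (M : nat) (u : R) : FM c M u <= 0.
Proof.
apply: ln_le0; rewrite ge_max gg_le1 /= expR_le1 oppr_le0; exact: ler0n.
Qed.

Lemma FM_geM {R : realType} (c : R) (M : nat) (u : R) : - M%:R <= FM c M u.
Proof.
rewrite /FM -{1}(expRK (- M%:R)) ler_ln ?posrE ?expR_gt0 ?FM_pos //.
by rewrite le_max lexx orbT.
Qed.

Lemma FM_ge_ln {R : realType} (c : R) (M : nat) (u : R) :
  0 < gg c u -> ln (gg c u) <= FM c M u.
Proof.
move=> g0; rewrite /FM ler_ln ?posrE ?FM_pos //.
by rewrite le_max lexx.
Qed.

Lemma FM_exp {R : realType} (c : R) (M : nat) (u : R) : gg c u <= expR (FM c M u).
Proof. by rewrite /FM lnK ?posrE ?FM_pos // le_max lexx. Qed.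

Lemma FM_nonincr {R : realType} (c : R) (M M' : nat) (u : R) : (M <= M')%N ->
  FM c M' u <= FM c M u.
Proof.
move=> MM; rewrite /FM ler_ln ?posrE ?FM_pos //.
rewrite ge_max le_max lexx /= le_max; apply/orP; right.
by rewrite ler_expR lerN2 ler_nat.
Qed.

Lemma FM_eq {R : realType} (c : R) (M : nat) (u : R) :
  0 < gg c u -> - ln (gg c u) <= M%:R -> FM c M u = ln (gg c u).
Proof.
move=> g0 hM; rewrite /FM; congr ln; apply/max_idPl.
by rewrite -(lnK (x := gg c u)) ?posrE // ler_expR lerNl.
Qed.

Lemma FM_zero {R : realType} (c : R) (M : nat) (u : R) :
  gg c u = 0 -> FM c M u = - M%:R.
Proof.
move=> g0; rewrite /FM g0; have -> : Num.max (0 : R) (expR (- M%:R)) = expR (- M%:R).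
  by apply/eqP; rewrite eq_le ge_max lexx expR_ge0 le_max lexx orbT.
by rewrite expRK.
Qed.

Local Open Scope ereal_scope.

Lemma inv_integral {R : realType} (mu : probability R R) (hinv : invariant_prob mu)
  (f : R -> \bar R) (mf : measurable_fun setT f) (f0 : forall x, 0 <= f x) :
  \int[mu]_x f (Tdbl x) = \int[mu]_x f x.
Proof.
have := @ge0_integral_pushforward _ _ _ _ R _ measurable_Tdbl mu setT f
  measurableT mf (fun y _ => f0 y).
rewrite preimage_setT => <-.
apply: (eq_measure_integral (mu : measure R R)).
  exact: measurable_Tdbl.
move=> _ A mA _ /=; by rewrite /pushforward hinv.
Qed.

Lemma inv_integral_iter {R : realType} (mu : probability R R) (hinv : invariant_prob mu)
  (f : R -> \bar R) (mf : measurable_fun setT f) (f0 : forall x, 0 <= f x) (k : nat) :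
  \int[mu]_x f (iter k Tdbl x) = \int[mu]_x f x.
Proof.
elim: k => [//|k IH].
under eq_integral do rewrite iterSr.
rewrite (@inv_integral _ mu hinv (fun x => f (iter k Tdbl x))) //.
exact: (measurableT_comp mf (measurable_iter k)).
Qed.

Lemma integral_FM_bound {R : realType} (c C : R) (C0 : (0 <= C)%R)
  (hpos : forall j, (0 < gg c (iter j.+1 Tdbl (bpt c)))%R)
  (hsum : forall n : nat, (- C * n%:R <= \sum_(j < n) ln (gg c (iter j.+1 Tdbl (bpt c))))%R)
  (mu : probability R R) (hinv : invariant_prob mu) (M : nat) :
  \int[mu]_x (- FM c M x)%:E <= (3 * ln 2 + 2 * C)%:E.
Proof.
set K := (3 * ln 2 + 2 * C)%R.
set h := fun x => (- FM c M x)%:E.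
have mh : measurable_fun setT h.
  by apply/measurable_EFinP; apply: measurable_funN; exact: measurable_FM.
have h0 x : 0 <= h x by rewrite lee_fin oppr_ge0 FM_le0.
have mhk (k : nat) : measurable_fun setT (fun x => h (iter k Tdbl x)).
  exact: (measurableT_comp mh (measurable_iter k)).
have gb := @global_bound _ c C C0 hpos hsum (FM c M) (FM_ge_ln c M) (FM_exp c M)
  M%:R (ler0n _ _) (FM_geM c M).
have hn n : \int[mu]_x (\sum_(k < n) h (iter k Tdbl x)) <= (M%:R + K * n%:R)%:E.
  apply: le_trans.
    apply: (@ge0_le_integral _ _ _ mu setT measurableT _ (cst (M%:R + K * n%:R)%:E)).
    - by move=> x _; apply: sume_ge0 => k _; exact: h0.
    - exact: emeasurable_sum.
    - exact: measurable_cst.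
    move=> x _ /=; rewrite /h sumEFin lee_fin sumrN lerNl opprD.
    exact: gb.
  rewrite integral_cst //; set y := (X in _ * X); have -> : y = 1 by exact: probability_setT.
  by rewrite mule1.
have hs n : \int[mu]_x (\sum_(k < n) h (iter k Tdbl x)) = \sum_(k < n) \int[mu]_x h x.
  rewrite (@ge0_integral_sum _ _ _ mu setT measurableT _ (fun (k : 'I_n) x => h (iter k Tdbl x))) //.
  by apply: eq_bigr => k _; rewrite inv_integral_iter.
have I0 : 0 <= \int[mu]_x h x by apply: integral_ge0 => x _.
have I1 : \int[mu]_x h x <= (M%:R + K * 1%:R)%:E.
  by have := hn 1%N; rewrite hs big_ord1.
move: I0 I1 hn hs; case: (\int[mu]_x h x) => [i| |] //= I0 I1 hn hs.
rewrite lee_fin; apply/negP => /negP; rewrite -ltNge => Ki.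
have [n hnn] := ex_nat_gt (M%:R / (i - K))%R.
have := hn n; rewrite hs sumEFin lee_fin sumr_const card_ord -mulr_natr.
apply/negP; rewrite -ltNge.
have iK : (0 < i - K)%R by rewrite subr_gt0.
rewrite ltr_pdivrMr // in hnn.
move: hnn; set m := n%:R; lra.
Qed.

Lemma lim_FM {R : realType} (c x : R) :
  limn (fun M : nat => (- FM c M x)%:E) = - fc c x.
Proof.
have nd : {homo (fun M : nat => (- FM c M x)%:E) : n m / (n <= m)%N >-> n <= m}.
  by move=> n m nm; rewrite lee_fin lerN2 FM_nonincr.
rewrite (cvg_lim _ (ereal_nondecreasing_cvgn nd)) //.
rewrite fcE; have [g0|g0] := eqVneq (gg c x) 0%R.
  rewrite /=.
  have gM (M : nat) : (- FM c M x)%:E = (M%:R)%:E by rewrite FM_zero // opprK.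
  case E : (ereal_sup _) => [s| |] //.
    have [M hM] := ex_nat_gt s.
    have : (M%:R)%:E <= s%:E :> \bar R.
      by rewrite -E -gM; apply: ereal_sup_ubound; exists M.
    by rewrite lee_fin leNgt hM.
  have : (0%R)%:E <= -oo :> \bar R.
    by rewrite -E -(gM 0%N); apply: ereal_sup_ubound; exists 0%N.
  by [].
have gp : (0 < gg c x)%R by rewrite lt_neqAle eq_sym g0 gg_ge0.
rewrite /=; apply/eqP; rewrite eq_le; apply/andP; split.
  apply: ub_ereal_sup => _ [M _ <-]; rewrite lee_fin lerN2.
  exact: FM_ge_ln.
have [M hM] := ex_nat_gt (- ln (gg c x)).
apply: ereal_sup_ubound; exists M => //.
by rewrite FM_eq // ltW.
Qed.

Lemma integral_fc_bound {R : realType} (c C : R) (C0 : (0 <= C)%R)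
  (hpos : forall j, (0 < gg c (iter j.+1 Tdbl (bpt c)))%R)
  (hsum : forall n : nat, (- C * n%:R <= \sum_(j < n) ln (gg c (iter j.+1 Tdbl (bpt c))))%R)
  (mu : probability R R) (hinv : invariant_prob mu) :
  (- (3 * ln 2 + 2 * C))%:E <= \int[mu]_x fc c x.
Proof.
set K := (3 * ln 2 + 2 * C)%R.
set g' := fun (M : nat) x => (- FM c M x)%:E.
have mg' M : measurable_fun setT (g' M).
  by apply/measurable_EFinP; apply: measurable_funN; exact: measurable_FM.
have g'0 M x : setT x -> 0 <= g' M x by move=> _; rewrite lee_fin oppr_ge0 FM_le0.
have nd x : setT x -> {homo g'^~ x : n m / (n <= m)%N >-> n <= m}.
  by move=> _ n m nm; rewrite /g' lee_fin lerN2 FM_nonincr.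
have mct := @monotone_convergence _ _ R mu setT measurableT g' mg' g'0 nd.
have hI : \int[mu]_x (- fc c x) <= K%:E.
  under eq_integral do rewrite -lim_FM.
  rewrite mct; apply: lime_le.
    apply: ereal_nondecreasing_is_cvgn => m n mn.
    apply: ge0_le_integral => //; first by move=> x _; exact: g'0.
    by move=> x _; exact: nd.
  by apply: nearW => M; exact: (@integral_FM_bound _ c C C0 hpos hsum mu hinv M).
have e : \int[mu]_x fc c x = - \int[mu]_x (- fc c x).
  rewrite -integral_ge0N; last by move=> x _; rewrite oppe_ge0 fc_le0.
  by under eq_integral do rewrite oppeK.
by rewrite e EFinN leeN2.
Qed.

Local Close Scope ereal_scope.

Theorem proposition2p3 (R : realType) (c : R) (hc0 : 0 <= c) (hc1 : c < 1)
  (hchi : (-oo < chi_minus (fc c) (Tdbl (bpt c)))%E) :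
  exists K : R, 0 < K /\
    (forall x : R, 0 <= x < 1 ->
       (exists n : nat, iter n Tdbl x = bpt c) \/ ((- K)%:E < chi_plus (fc c) x)%E) /\
    ((- K)%:E <= alpha c)%E.
Proof.
have [C [C0 [hpos hsum]]] := @extract_hyp R c hchi.
have K00 := @K0_ge0 R C C0.
exists (3 * ln 2 + 2 * C + 1); split; first by lra.
have lt : ((- (3 * ln 2 + 2 * C + 1))%:E < (- (3 * ln 2 + 2 * C))%:E)%E.
  by rewrite lte_fin; lra.
split.
  move=> x hx; have [h|h] := pselect (exists n : nat, iter n Tdbl x = bpt c).
    by left.
  right; apply: (lt_le_trans lt).
  exact: (@part1 _ c C C0 hpos hsum x (@avoid_pos _ c x hx h)).
apply: le_ereal_inf_tmp => _ [mu hmu <-].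
apply: (le_trans (ltW lt)).
exact: (@integral_fc_bound _ c C C0 hpos hsum mu hmu).
Qed.
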